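(* Every valid non-entangling physical transformation of a system of $N$ elementary toy systems is a composition of local permutations (permutations of $\{1,2,3,4\}$ acting on a single elementary subsystem) and system swaps $S_{i,j}$, where $S_{i,j}(a_1,\dots,a_i,\dots,a_j,\dots,a_N) = (a_1,\dots,a_j,\dots,a_i,\dots,a_N)$.
   Context: In Spekkens' toy theory, ontic states of $N$ elementary systems are elements of $\{1,2,3,4\}^N$, and an epistemic state is a set of ontic states; only certain epistemic states are valid (those satisfying the knowledge balance principle globally and on all subsystems; equivalently, those equal to the set of ontic states fixed by some toy stabilizer group). A physical transformation is a map $T$ on ontic states, acting on epistemic states by $T(E)=\{T(o): o\in E\}$; it is valid if it maps valid epistemic states to valid epistemic states, and valid transformations are permutations of the ontic states. A product state with respect to a division of the systems into groups $A_1,\dots,A_k$ is a Cartesian product of valid epistemic states on the groups. A transformation is non-entangling if, for every division into groups $A_1,\dots,A_k$, it maps every product state with respect to that division to a product state with respect to the same division. *)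

(* Defs.v *)
(* Spekkens' toy theory, encoded in its symplectic
   (toy-stabilizer) form. *)
From mathcomp Require Import all_boot all_order all_fingroup.
Set Implicit Arguments. Unset Strict Implicit. Unset Printing Implicit Defensive.

(* Ontic states of a collection of elementary systems indexed by I:
   each elementary system is in one of 4 ontic states 'I_4 = {0,1,2,3}
   (standing for {1,2,3,4}). *)
Definition ontic (I : finType) := {ffun I -> 'I_4}.

(* Coordinates of an elementary ontic state x in Z2 x Z2:
   x = 2 q + p. *)
Definition qbit (x : 'I_4) : bool := 2 <= x.
Definition pbit (x : 'I_4) : bool := odd x.

(* Toy stabilizer operators (up to sign): for each system, a pair of bits
   (a_i, b_i), i.e. one of I, X, Y, Z. *)
Definition tobs (I : finType) := ({ffun I -> bool} * {ffun I -> bool})%type.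

Definition tzero (I : finType) : tobs I := ([ffun=> false], [ffun=> false]).

(* product of toy operators (up to sign) *)
Definition tadd (I : finType) (f g : tobs I) : tobs I :=
  ([ffun i => f.1 i (+) g.1 i], [ffun i => f.2 i (+) g.2 i]).

(* value (as a bit; false = +1, true = -1) of the operator f on ontic state o *)
Definition teval (I : finType) (f : tobs I) (o : ontic I) : bool :=
  \big[addb/false]_(i : I) ((f.1 i && qbit (o i)) (+) (f.2 i && pbit (o i))).

(* toy (anti)commutation: symplectic form; false = commute *)
Definition symp (I : finType) (f g : tobs I) : bool :=
  \big[addb/false]_(i : I) ((f.1 i && g.2 i) (+) (f.2 i && g.1 i)).

(* A valid epistemic state: the (nonempty) set of ontic states fixed by a
   toy stabilizer group, i.e. a commuting group V of toy operators with
   signs c, not containing -I (equivalently: the fixed set is nonempty). *)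
Definition valid_state (I : finType) (E : {set ontic I}) : Prop :=
  E != set0 /\
  exists (V : {set tobs I}) (c : tobs I -> bool),
    [/\ tzero I \in V,
        {in V &, forall f g, tadd f g \in V},
        {in V &, forall f g, symp f g = false} &
        E = [set o | [forall f in V, teval f o == c f]]].

Definition group_of (N k : nat) (g : 'I_N -> 'I_k) (j : 'I_k) : finType :=
  {i : 'I_N | g i == j}.

Definition restr (N k : nat) (g : 'I_N -> 'I_k) (j : 'I_k) (o : ontic 'I_N)
  : ontic (group_of g j) := [ffun x => o (val x)].

Definition product_state (N k : nat) (g : 'I_N -> 'I_k)
  (E : {set ontic 'I_N}) : Prop :=
  exists Es : forall j : 'I_k, {set ontic (group_of g j)},
    (forall j, valid_state (Es j)) /\
    E = [set o | [forall j, restr g j o \in Es j]].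

Definition valid_trans (N : nat) (T : {perm ontic 'I_N}) : Prop :=
  forall E : {set ontic 'I_N}, valid_state E -> valid_state (T @: E).

Definition non_entangling (N : nat) (T : {perm ontic 'I_N}) : Prop :=
  forall (k : nat) (g : 'I_N -> 'I_k) (E : {set ontic 'I_N}),
    product_state g E -> product_state g (T @: E).

Definition local_fun (N : nat) (i : 'I_N) (s : {perm 'I_4}) (o : ontic 'I_N)
  : ontic 'I_N := [ffun x => if x == i then s (o x) else o x].

Definition swap_fun (N : nat) (i j : 'I_N) (o : ontic 'I_N) : ontic 'I_N :=
  [ffun x => o (tperm i j x)].

Definition local_perms (N : nat) : {set {perm ontic 'I_N}} :=
  [set p : {perm ontic 'I_N} | [exists i : 'I_N, exists s : {perm 'I_4},
              [forall o, p o == local_fun i s o]]].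

Definition swaps (N : nat) : {set {perm ontic 'I_N}} :=
  [set p : {perm ontic 'I_N} | [exists i : 'I_N, exists j : 'I_N,
              [forall o, p o == swap_fun i j o]]].

(* Main.v *)
Require Import Defs.
From mathcomp Require Import all_boot all_order all_fingroup.
Set Implicit Arguments. Unset Strict Implicit. Unset Printing Implicit Defensive.

Lemma big_addb_single (J : finType) (u : J) (F : J -> bool) :
  (forall y : J, y = u) -> \big[addb/false]_(y : J) F y = F u.
Proof.
move=> Hu; rewrite (bigD1 u) //= big1 ?addbF // => y.
by rewrite (Hu y) eqxx.
Qed.

Lemma teval0 (I : finType) (o : ontic I) : teval (tzero I) o = false.
Proof. by rewrite /teval big1 // => i _; rewrite /tzero !ffunE. Qed.

Lemma tadd0 (I : finType) (f : tobs I) : tadd (tzero I) f = f.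
Proof. by case: f => a b; rewrite /tadd /tzero /=; congr pair; apply/ffunP => i; rewrite !ffunE. Qed.
Lemma taddf0 (I : finType) (f : tobs I) : tadd f (tzero I) = f.
Proof. by case: f => a b; rewrite /tadd /tzero /=; congr pair; apply/ffunP => i; rewrite !ffunE addbF. Qed.
Lemma taddxx (I : finType) (f : tobs I) : tadd f f = tzero I.
Proof. by case: f => a b; rewrite /tadd /tzero /=; congr pair; apply/ffunP => i; rewrite !ffunE addbb. Qed.
Lemma symp0 (I : finType) (f : tobs I) : symp (tzero I) f = false.
Proof. by rewrite /symp big1 // => i _; rewrite /tzero !ffunE. Qed.
Lemma sympf0 (I : finType) (f : tobs I) : symp f (tzero I) = false.
Proof. by rewrite /symp big1 // => i _; rewrite /tzero !ffunE !andbF. Qed.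
Lemma sympxx (I : finType) (f : tobs I) : symp f f = false.
Proof. by rewrite /symp big1 // => i _; rewrite andbC addbb. Qed.

Lemma valid_setT (I : finType) : valid_state [set: ontic I].
Proof.
split; first by apply/set0Pn; exists [ffun=> ord0]; rewrite in_setT.
exists [set tzero I], (fun _ => false); split.
- by rewrite inE.
- by move=> f g; rewrite !inE => /eqP -> /eqP ->; rewrite tadd0.
- by move=> f g; rewrite !inE => /eqP -> /eqP ->; exact: symp0.
- apply/setP => o; rewrite !inE; apply/esym/forall_inP => f.
  by rewrite inE => /eqP ->; rewrite teval0.
Qed.

Definition fob (J : finType) (a c : bool) : tobs J := ([ffun=> a], [ffun=> c]).
Definition beta (a c : bool) (x : 'I_4) := (a && qbit x) (+) (c && pbit x).

Lemma teval_single (J : finType) (u : J) (Hu : forall y, y = u) a c (o : ontic J) :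
  teval (fob J a c) o = beta a c (o u).
Proof. by rewrite /teval (big_addb_single _ Hu) /fob /= !ffunE. Qed.

Definition wit (a c b : bool) : 'I_4 :=
  if a then (if b then @Ordinal 4 2 isT else @Ordinal 4 0 isT)
  else (if b then @Ordinal 4 1 isT else @Ordinal 4 0 isT).

Lemma witP a c b : a || c -> beta a c (wit a c b) = b.
Proof. by case: a; case: c; case: b. Qed.

Lemma valid_pair (J : finType) (u : J) (Hu : forall y, y = u) a c b : a || c ->
  valid_state [set o : ontic J | beta a c (o u) == b].
Proof.
move=> Hac.
have hne : fob J a c != tzero J.
  apply/eqP => /(congr1 (fun h : tobs J => (h.1 u, h.2 u))); rewrite /= !ffunE => -[Ha Hc].
  by move: Hac; rewrite Ha Hc.
have hne' : tzero J != fob J a c by rewrite eq_sym.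
split; first by apply/set0Pn; exists [ffun=> wit a c b]; rewrite inE ffunE witP.
exists [set tzero J; fob J a c], (fun h => if h == fob J a c then b else false); split.
- by rewrite !inE eqxx.
- by move=> f g; rewrite !inE => /orP[]/eqP-> /orP[]/eqP->;
    rewrite ?tadd0 ?taddf0 ?taddxx eqxx ?orbT.
- by move=> f g; rewrite !inE => /orP[]/eqP-> /orP[]/eqP->;
    rewrite ?symp0 ?sympf0 ?sympxx.
- apply/setP => o; rewrite !inE; apply/idP/forall_inP.
  + move=> H h; rewrite !inE => /orP[]/eqP->.
    * by rewrite teval0 (negbTE hne').
    * by rewrite eqxx (teval_single Hu).
  + move=> H; have := H (fob J a c); rewrite !inE eqxx orbT (teval_single Hu).
    by apply.
Qed.

Definition gid (N : nat) : 'I_N -> 'I_N := fun x => x.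
Arguments gid : clear implicits.

Definition uj (N : nat) (j : 'I_N) : Defs.group_of (gid N) j :=
  exist (fun i => gid N i == j) j (eqxx j).

Lemma uj_uniq (N : nat) (j : 'I_N) (y : Defs.group_of (gid N) j) : y = uj j.
Proof. by apply: val_inj; rewrite /=; apply/eqP; exact: (valP y). Qed.

Lemma prod_C (N : nat) (i : 'I_N) a c b : a || c ->
  product_state (gid N) [set o : ontic 'I_N | beta a c (o i) == b].
Proof.
move=> Hac.
exists (fun j => if j == i then [set o : ontic (Defs.group_of (gid N) j) | beta a c (o (uj j)) == b]
                 else setT).
split.
- move=> j; case: (j == i); [exact: valid_pair (@uj_uniq N j) _ _ _ Hac | exact: valid_setT].
- apply/setP => o; rewrite !inE; apply/idP/forallP.
  + move=> H j; have [->|_] := eqVneq j i; last by rewrite in_setT.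
    by rewrite inE /restr ffunE.
  + by move=> H; have := H i; rewrite eqxx inE /restr ffunE.
Qed.

Lemma prod_decode (N : nat) (E : {set ontic 'I_N}) : product_state (gid N) E ->
  exists B : 'I_N -> 'I_4 -> bool, forall o, (o \in E) = [forall j, B j (o j)].
Proof.
case=> Es [_ ->].
exists (fun j x => ([ffun=> x] : ontic (Defs.group_of (gid N) j)) \in Es j) => o.
have Er : forall j, restr (gid N) j o = [ffun=> o j].
  move=> j; apply/ffunP => y; rewrite !ffunE.
  by have -> : val y = j by apply/eqP; exact: (valP y).
by rewrite inE; apply/forallP/forallP => H j; move: (H j); rewrite Er.
Qed.

Lemma mem_imset_perm (X : finType) (T : {perm X}) (A : {set X}) o :
  (o \in T @: A) = ((T^-1)%g o \in A).
Proof.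
apply/imsetP/idP => [[x Ax ->]|H]; first by rewrite permK.
by exists ((T^-1)%g o); rewrite ?permKV.
Qed.

Definition upd (N : nat) (o : ontic 'I_N) j x : ontic 'I_N :=
  [ffun y => if y == j then x else o y].

Lemma split_prod (N : nat) (F : ontic 'I_N -> bool) (B0 B1 : 'I_N -> 'I_4 -> bool) :
  (forall o, (F o == false) = [forall j, B0 j (o j)]) ->
  (forall o, (F o == true) = [forall j, B1 j (o j)]) ->
  (exists o, F o) -> (exists o, ~~ F o) ->
  exists j0 (D : 'I_4 -> bool), forall o, F o = D (o j0).
Proof.
move=> H0 H1 [y0 Fy0] [x0 Fx0].
have Bx0 : forall j, B0 j (x0 j).
  by apply/forallP; rewrite -H0; apply/eqP; exact: negbTE.
have : ~~ [forall j, B0 j (y0 j)] by rewrite -H0 Fy0.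
case/forallPn => j0 Hj0.
have full : forall j z, j != j0 -> B0 j z.
  move=> j1 z Hj1; apply/negPn/negP => Hz.
  pose o1 := upd x0 j0 (y0 j0); pose o2 := upd x0 j1 z.
  have Fo1 : F o1.
    apply/negPn/negP => /negbTE Fo; move: (H0 o1); rewrite Fo eqxx => /esym/forallP/(_ j0).
    by rewrite /o1 ffunE eqxx (negbTE Hj0).
  have Fo2 : F o2.
    apply/negPn/negP => /negbTE Fo; move: (H0 o2); rewrite Fo eqxx => /esym/forallP/(_ j1).
    by rewrite /o2 ffunE eqxx (negbTE Hz).
  have A1 := H1 o1; rewrite Fo1 eqxx in A1; move/esym/forallP: A1 => A1.
  have A2 := H1 o2; rewrite Fo2 eqxx in A2; move/esym/forallP: A2 => A2.
  have : F x0 == true.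
    rewrite H1; apply/forallP => j; have [->|ne] := eqVneq j j0.
      by have := A2 j0; rewrite /o2 ffunE eq_sym (negbTE Hj1).
    by have := A1 j; rewrite /o1 ffunE (negbTE ne).
  by rewrite (negbTE Fx0).
exists j0, (fun x => ~~ B0 j0 x) => o.
have : (F o == false) = B0 j0 (o j0).
  rewrite H0; apply/forallP/idP => [H|H j]; first exact: H.
  by have [->|ne] := eqVneq j j0; [exact: H | exact: full].
by case: (F o) => /= <-.
Qed.

Lemma parity_same (N : nat) (D1 D2 D3 : 'I_4 -> bool) (j1 j2 j3 : 'I_N) :
  (forall o : ontic 'I_N, D1 (o j1) (+) D2 (o j2) (+) D3 (o j3) = false) ->
  (exists x y, D1 x != D1 y) -> (j1 == j2) || (j1 == j3).
Proof.
move=> H [x [y Hxy]]; apply/negPn/negP; rewrite negb_or => /andP[n2 n3].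
have e2 : (j2 == j1) = false by rewrite eq_sym (negbTE n2).
have e3 : (j3 == j1) = false by rewrite eq_sym (negbTE n3).
have := H (upd [ffun=> x] j1 y); have := H [ffun=> x].
rewrite /upd !ffunE eqxx e2 e3.
move: Hxy; by case: (D1 x); case: (D1 y); case: (D2 x); case: (D3 x).
Qed.

Lemma coord_dep (N : nat) (T : {perm ontic 'I_N}) (HT : non_entangling T) (i : 'I_N) a c :
  a || c -> exists j (D : 'I_4 -> bool),
    (forall o, beta a c ((T^-1)%g o i) = D (o j)) /\ exists x y, D x != D y.
Proof.
move=> Hac.
have [B0 HB0] := prod_decode (HT _ _ _ (prod_C i false Hac)).
have [B1 HB1] := prod_decode (HT _ _ _ (prod_C i true Hac)).
pose F o := beta a c ((T^-1)%g o i).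
have w : forall b, F (T [ffun=> wit a c b]) = b.
  by move=> b; rewrite /F permK ffunE witP.
have [j [D HD]] : exists j0 (D : 'I_4 -> bool), forall o, F o = D (o j0).
  apply: (split_prod (B0 := B0) (B1 := B1)).
  - by move=> o; rewrite -HB0 mem_imset_perm inE.
  - by move=> o; rewrite -HB1 mem_imset_perm inE.
  - by exists (T [ffun=> wit a c true]); rewrite w.
  - by exists (T [ffun=> wit a c false]); rewrite w.
exists j, D; split; first exact: HD.
exists ((T [ffun=> wit a c true]) j), ((T [ffun=> wit a c false]) j).
by rewrite -!HD !w.
Qed.

Definition decode (q p : bool) : 'I_4 :=
  if q then (if p then @Ordinal 4 3 isT else @Ordinal 4 2 isT)
  else (if p then @Ordinal 4 1 isT else @Ordinal 4 0 isT).

Lemma decodeK (y : 'I_4) : decode (qbit y) (pbit y) = y.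
Proof. by case: y => [[|[|[|[|m]]]] Hm] //=; apply: val_inj. Qed.

Lemma site_form (N : nat) (T : {perm ontic 'I_N}) (HT : non_entangling T) (i : 'I_N) :
  exists p : 'I_N * ('I_4 -> 'I_4), forall o, (T^-1)%g o i = p.2 (o p.1).
Proof.
have [j1 [D1 [H1 [x [y N1]]]]] := coord_dep HT i (a:=true) (c:=false) isT.
have [j2 [D2 [H2 [x2 [y2 N2]]]]] := coord_dep HT i (a:=false) (c:=true) isT.
have [j3 [D3 [H3 _]]] := coord_dep HT i (a:=true) (c:=true) isT.
have par : forall z : 'I_4, beta true false z (+) beta false true z (+) beta true true z = false.
  by move=> z; rewrite /beta /=; case: (qbit z); case: (pbit z).
have P1 : (j1 == j2) || (j1 == j3).
  apply: (@parity_same N D1 D2 D3) => [o|]; last by exists x, y.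
  by rewrite -H1 -H2 -H3 par.
have P2 : (j2 == j1) || (j2 == j3).
  apply: (@parity_same N D2 D1 D3) => [o|]; last by exists x2, y2.
  by rewrite -H1 -H2 -H3 (addbC (beta false true _)) par.
have e12 : j1 = j2.
  have [//|n12] := eqVneq j1 j2.
  move: P1; rewrite (negbTE n12) /= => /eqP e13.
  move: P2; rewrite eq_sym (negbTE n12) /= => /eqP e23.
  by rewrite e13 e23 eqxx in n12.
have H1' : forall o, qbit ((T^-1)%g o i) = D1 (o j1).
  by move=> o; rewrite -H1 /beta /= addbF.
have H2' : forall o, pbit ((T^-1)%g o i) = D2 (o j2).
  by move=> o; rewrite -H2 /beta /=.
exists (j1, fun z => decode (D1 z) (D2 z)) => o /=.
by rewrite -(decodeK ((T^-1)%g o i)) H1' H2' e12.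
Qed.

Lemma global_form (N : nat) (T : {perm ontic 'I_N}) (HT : non_entangling T) :
  exists (sg : 'I_N -> 'I_N) (h : 'I_N -> 'I_4 -> 'I_4),
    forall o i, (T^-1)%g o i = h i (o (sg i)).
Proof.
have [f Hf] := fin_all_exists
  (U := fun _ => ('I_N * ('I_4 -> 'I_4))%type)
  (P := fun i (p : 'I_N * ('I_4 -> 'I_4)) => forall o, (T^-1)%g o i = p.2 (o p.1))
  (site_form HT).
by exists (fun i => (f i).1), (fun i => (f i).2) => o i; exact: Hf.
Qed.

Lemma ne_ord (a : 'I_4) : (if a == ord0 then @Ordinal 4 1 isT else ord0) != a.
Proof. by case: (eqVneq a ord0) => [->|H] //; rewrite eq_sym. Qed.

Lemma T_form (N : nat) (T : {perm ontic 'I_N}) (HT : non_entangling T) :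
  exists (tau : {perm 'I_N}) (pi : 'I_N -> {perm 'I_4}),
    forall o, T o = [ffun j => pi j (o (tau j))].
Proof.
have [sg [h Hf]] := global_form HT.
have HU : forall (o : ontic 'I_N) i, o i = h i ((T o) (sg i)) by move=> o i; rewrite -Hf permK.
have hsurj : forall i a, exists x, h i x = a.
  by move=> i a; exists ((T [ffun=> a]) (sg i)); rewrite -HU ffunE.
have hinj : forall i, injective (h i).
  move=> i.
  have [g Hg] := fin_all_exists (U := fun _ => 'I_4) (P := fun a x => h i x = a) (hsurj i).
  have ginj : injective g by apply: (can_inj (g := h i)) => a; exact: Hg.
  have [g' K1 K2] := injF_bij ginj.
  have hg : forall x, g (h i x) = x by move=> x; rewrite -{1}(K2 x) Hg K2.
  exact: can_inj hg.
have sinj : injective sg.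
  move=> i i' E; apply/eqP/negPn/negP => ne.
  pose b : 'I_4 := if h i' ord0 == ord0 then @Ordinal 4 1 isT else ord0.
  pose w : ontic 'I_N := [ffun k => if k == i then h i ord0 else b].
  have e1 := HU w i; rewrite ffunE eqxx in e1.
  have z := hinj i _ _ e1.
  have e2 := HU w i'; rewrite ffunE eq_sym (negbTE ne) -E -z in e2.
  by move: (ne_ord (h i' ord0)); rewrite -/b e2 eqxx.
pose sp := perm sinj.
pose hp i := perm (hinj i).
exists (sp^-1)%g, (fun j => (hp ((sp^-1)%g j))^-1)%g => o.
apply/ffunP => j; rewrite ffunE.
have st : sg ((sp^-1)%g j) = j by rewrite -(permE sinj) permKV.
by rewrite (HU o ((sp^-1)%g j)) st -(permE (hinj _)) permK.
Qed.

Lemma local_inj (N : nat) (i : 'I_N) (s : {perm 'I_4}) : injective (local_fun i s).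
Proof.
apply: (can_inj (g := local_fun i s^-1)) => o; apply/ffunP => x; rewrite !ffunE.
by case: (x == i) => //=; exact: permK.
Qed.

Lemma swap_inj (N : nat) (i j : 'I_N) : injective (swap_fun i j).
Proof.
apply: (can_inj (g := swap_fun i j)) => o; apply/ffunP => x; rewrite !ffunE.
by rewrite tpermK.
Qed.

Arguments local_inj {N} i s.
Arguments swap_inj {N} i j.

Lemma local_mem (N : nat) (i : 'I_N) (s : {perm 'I_4}) :
  perm (local_inj i s) \in local_perms N :|: swaps N.
Proof.
rewrite inE; apply/orP; left; rewrite inE; apply/existsP; exists i; apply/existsP; exists s.
by apply/forallP => o; rewrite permE.
Qed.

Lemma swap_mem (N : nat) (i j : 'I_N) :
  perm (swap_inj i j) \in local_perms N :|: swaps N.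
Proof.
rewrite inE; apply/orP; right; rewrite inE; apply/existsP; exists i; apply/existsP; exists j.
by apply/forallP => o; rewrite permE.
Qed.

Lemma swaps_prod (N : nat) (ts : seq ('I_N * 'I_N)) :
  exists s : seq {perm ontic 'I_N},
    all (fun p => p \in local_perms N :|: swaps N) s /\
    forall o, (\prod_(p <- s) p)%g o = [ffun x => o ((\prod_(t <- ts) tperm t.1 t.2)%g x)].
Proof.
elim: ts => [|t ts [s [Hs Hp]]].
  exists [::]; split => // o; rewrite !big_nil perm1; apply/ffunP => x; by rewrite ffunE perm1.
exists (s ++ [:: perm (swap_inj t.1 t.2)]); split.
  by rewrite all_cat Hs /= swap_mem.
move=> o; rewrite big_cat big_seq1 permM Hp permE big_cons; apply/ffunP => x.
by rewrite !ffunE permM.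
Qed.

Lemma locals_prod (N : nat) (pi : 'I_N -> {perm 'I_4}) (r : seq 'I_N) : uniq r ->
  exists s : seq {perm ontic 'I_N},
    all (fun p => p \in local_perms N :|: swaps N) s /\
    forall o, (\prod_(p <- s) p)%g o = [ffun x => if x \in r then pi x (o x) else o x].
Proof.
elim: r => [|a r IH] /=.
  move=> _; exists [::]; split => // o; rewrite big_nil perm1; apply/ffunP => x; by rewrite ffunE.
case/andP => nar /IH [s [Hs Hp]].
exists (s ++ [:: perm (local_inj a (pi a))]); split; first by rewrite all_cat Hs /= local_mem.
move=> o; rewrite big_cat big_seq1 permM Hp permE; apply/ffunP => x; rewrite !ffunE in_cons.
by case: eqP => [->|_] /=; rewrite ?(negbTE nar).
Qed.

Theorem mainTheorem10 (N : nat) (T : {perm ontic 'I_N}) :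
  valid_trans T -> non_entangling T ->
  exists s : seq {perm ontic 'I_N},
    all (fun p => p \in local_perms N :|: swaps N) s /\
    T = (\prod_(p <- s) p)%g.
Proof.
move=> _ HT.
have [tau [pi HT']] := T_form HT.
have [ts Hts _] := prod_tpermP tau.
have [s1 [A1 P1]] := swaps_prod ts.
have [s2 [A2 P2]] := locals_prod pi (enum_uniq 'I_N).
exists (s1 ++ s2); split; first by rewrite all_cat A1 A2.
apply/permP => o; rewrite big_cat permM P1 P2 HT'; apply/ffunP => x.
by rewrite !ffunE mem_enum -Hts.
Qed.
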